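(* The tree patterns $(21435,\text{-}1\text{-}\text{-})$ and $(13254,1\text{-}1\text{-})$ are Wilf-equivalent; that is, for all choices of values in $\{0,1\}$ at the positions marked ''-'', and all $n\ge0$, $|\mathcal{T}_n(21435,x1yz)|=|\mathcal{T}_n(13254,1u1v)|$.
   Context: $\mathcal{T}_n$ is the set of binary trees on $n$ vertices labeled $1,\dots,n$ by the search tree property. $c_L,c_R,p$: left child, right child, parent. A tree pattern is $(P,e)$, $P\in\mathcal{T}_k$, $e\colon[k]\setminus\{\text{root}\}\to\{0,1\}$ ($e(i)=1$: edge to the parent contiguous; $0$: non-contiguous). $T\in\mathcal{T}_n$ contains $(P,e)$ if there is an injection $f\colon[k]\to[n]$ such that for every non-root $i$ of $P$: if $e(i)=1$, $f(i)$ is the left (resp. right) child of $f(p(i))$ when $i$ is the left (resp. right) child of $p(i)$; if $e(i)=0$, $f(i)$ lies in the left (resp. right) subtree of $f(p(i))$. $\mathcal{T}_n(P,e)$ is the set of avoiders. Compact notation: $(\tau_1\cdots\tau_k,\,x_2\cdots x_k)$ denotes the pattern whose preorder vertex sequence (root, then left subtree recursively, then right subtree recursively) is $\tau_1,\dots,\tau_k$ and with $e(\tau_j)=x_j$. A hyphen ''-'' in the second component is a placeholder whose value (0 or 1) does not affect the set of avoiding trees. *)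

(* Defs.v *)
From mathcomp Require Import all_boot.
Set Implicit Arguments.
Unset Strict Implicit.
Unset Printing Implicit Defensive.

(* Unlabeled binary trees.  A tree with n nodes carries a unique labeling by
   1..n satisfying the search tree property (in-order labeling), so
   T_n is in bijection with the binary trees of size n. *)
Inductive btree := Leaf | Node of btree & btree.

Fixpoint bsize (t : btree) : nat :=
  match t with Leaf => 0 | Node l r => (bsize l + bsize r).+1 end.

(* Vertices are addressed by their path from the root:
   false = go to the left child, true = go to the right child.
   The children of vertex p are rcons p false (left) and rcons p true (right). *)
Fixpoint is_vertex (t : btree) (p : seq bool) : bool :=
  match t, p with
  | Leaf, _ => false
  | Node _ _, [::] => true
  | Node l r, b :: p' => is_vertex (if b then r else l) p'
  end.

(* A tree pattern (P,e): e assigns to each non-root vertex the contiguity of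
   the edge to its parent (true = 1 contiguous, false = 0 non-contiguous). *)
Definition contains (T P : btree) (e : seq bool -> bool) : Prop :=
  exists f : seq bool -> seq bool,
    (forall v, is_vertex P v -> is_vertex T (f v)) /\
    (forall v w, is_vertex P v -> is_vertex P w -> f v = f w -> v = w) /\
    (forall p b, is_vertex P (rcons p b) ->
       if e (rcons p b)
       then f (rcons p b) = rcons (f p) b
       else prefix (rcons (f p) b) (f (rcons p b)) ).

Definition avoiders (n : nat) (P : btree) (e : seq bool -> bool) :=
  { T : btree | bsize T = n /\ ~ contains T P e }.

(* Pattern (21435, x 1 y z): root 2, left child 1, right child 4,
   4 has left child 3 and right child 5.  In-order labels of paths:
   [::false]=1, [::]=2, [::true;false]=3, [::true]=4, [::true;true]=5. *)
Definition P21435 : btree :=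
  Node (Node Leaf Leaf) (Node (Node Leaf Leaf) (Node Leaf Leaf)).
Definition e21435 (x y z : bool) (v : seq bool) : bool :=
  match v with
  | [:: false] => x
  | [:: true] => true
  | [:: true; false] => y
  | [:: true; true] => z
  | _ => true                (* root / non-vertices: irrelevant *)
  end.

(* Pattern (13254, 1 u 1 v): root 1 with no left child, right child 3,
   3 has left child 2 and right child 5, 5 has left child 4.  Labels:
   [::]=1, [::true;false]=2, [::true]=3, [::true;true;false]=4, [::true;true]=5. *)
Definition P13254 : btree :=
  Node Leaf (Node (Node Leaf Leaf) (Node (Node Leaf Leaf) Leaf)).
Definition e13254 (u v : bool) (w : seq bool) : bool :=
  match w with
  | [:: true] => true
  | [:: true; false] => u
  | [:: true; true] => true
  | [:: true; true; false] => v
  | _ => true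
  end.

(* Main.v *)
Require Import Defs.
From mathcomp Require Import all_boot.
From Stdlib Require Import ProofIrrelevance.
From HB Require Import structures.
From mathcomp Require Import zify.

Fixpoint beq (a b : btree) : bool :=
  match a, b with
  | Leaf, Leaf => true
  | Node l r, Node l' r' => beq l l' && beq r r'
  | _, _ => false
  end.
Lemma beqP : Equality.axiom beq.
Proof.
elim=> [|l IHl r IHr] [|l' r'] /=; try by constructor.
by apply: (iffP andP) => [[/IHl -> /IHr ->]|[<- <-]]; split; [apply/IHl|apply/IHr].
Qed.
HB.instance Definition _ := hasDecEq.Build btree beqP.

Definition isnode (t : btree) : bool := if t is Node _ _ then true else false.
Definition build (s : seq btree) : btree := foldr Node Leaf s.
Fixpoint spine (t : btree) : seq btree :=
  match t with Leaf => [::] | Node l r => l :: spine r end.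

Lemma spine_build s : spine (build s) = s.
Proof. by elim: s => //= a s ->. Qed.
Lemma build_spine t : build (spine t) = t.
Proof. by elim: t => //= l _ r ->. Qed.

Fixpoint phi_acc (t acc : btree) : btree :=
  match t with Leaf => acc | Node l r => phi_acc r (Node (phi_acc l Leaf) acc) end.
Definition phi t := phi_acc t Leaf.

Lemma phi_accE t acc : phi_acc t acc = foldr Node acc (rev (map phi (spine t))).
Proof.
elim: t acc => //= l _ r IHr acc.
by rewrite IHr rev_cons -cats1 foldr_cat.
Qed.

Lemma phiE t : phi t = build (rev (map phi (spine t))).
Proof. exact: phi_accE. Qed.

Lemma bsize_build s : bsize (build s) = sumn (map (fun t => (bsize t).+1) s).
Proof. by elim: s => //= a s ->; rewrite addSn. Qed.

Lemma bsize_phi_acc t acc : bsize (phi_acc t acc) = bsize t + bsize acc.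
Proof.
elim: t acc => //= l IHl r IHr acc.
rewrite IHr /= IHl addn0; lia.
Qed.

Lemma bsize_phi t : bsize (phi t) = bsize t.
Proof. by rewrite /phi bsize_phi_acc addn0. Qed.

Lemma isnode_phi t : isnode (phi t) = isnode t.
Proof.
case: t => //= l r; rewrite phiE /= rev_cons -cats1 /build foldr_cat /=.
by case: (rev _).
Qed.

Lemma phi_inv_all t : all (fun x => phi (phi x) == x) (spine t).
Proof.
elim: t => //= l IHl r IHr; rewrite IHr andbT.
rewrite [phi l]phiE [phi (build _)]phiE spine_build map_rev revK -map_comp.
have -> : map (phi \o phi) (spine l) = map id (spine l).
  by apply/eq_in_map => x /(allP IHl) /eqP.
by rewrite map_id build_spine.
Qed.

Lemma phiK t : phi (phi t) = t.
Proof.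
rewrite [phi t]phiE phiE spine_build map_rev revK -map_comp.
have -> : map (phi \o phi) (spine t) = map id (spine t).
  by apply/eq_in_map => x /(allP (phi_inv_all t)) /eqP.
by rewrite map_id build_spine.
Qed.

Fixpoint hasG (ws : seq (seq bool)) (t : btree) : bool :=
  match t with
  | Leaf => false
  | Node l r => all (fun w => is_vertex t w) ws || hasG ws l || hasG ws r
  end.

Lemma hasGP ws t : ws != [::] ->
  reflect (exists p, all (fun w => is_vertex t (p ++ w)) ws) (hasG ws t).
Proof.
move=> ws0; elim: t => [|l IHl r IHr] /=.
  apply: (iffP idP) => // [[p]].
  by case: ws ws0 => // w ws' _ /=.
apply: (iffP idP).
  case/orP => [/orP [H|/IHl [p Hp]]|/IHr [p Hp]].
  - by exists [::].
  - by exists (false :: p).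
  - by exists (true :: p).
case=> [[|[] p] Hp].
- by rewrite Hp.
- by apply/orP; right; apply/IHr; exists p.
- by apply/orP; left; apply/orP; right; apply/IHl; exists p.
Qed.

Definition wsA : seq (seq bool) := [:: [::false]; [::true;false]; [::true;true]].
Definition wsB : seq (seq bool) := [:: [::true;false]; [::true;true;false]].
Definition R (a b : btree) : bool := ~~ (isnode a && isnode b).

Lemma sortedRcc a b x : sorted R [:: a, b & x] = R a b && sorted R (b :: x).
Proof. by []. Qed.

Lemma hasA_build s :
  hasG wsA (build s) = has (hasG wsA) s || ~~ sorted R (take (size s).-1 s).
Proof.
elim: s => // a s IH.
rewrite [build _]/= [hasG _ _]/= -/(build s) IH.
case: s IH => [|b [|c s]] _.
- by case: a => //= *; rewrite !orbF.
- by case: a => [|? ?]; case: b => [|? ?] /=; rewrite ?orbF ?andbF //.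
- have -> : take (size [:: a, b, c & s]).-1 [:: a, b, c & s] =
     a :: take (size [:: b, c & s]).-1 [:: b, c & s] by [].
  rewrite sortedRcc; move: (sorted R _) => S.
  rewrite [has _ (a :: _)]/= /R.
  by case: a => [|a1 a2]; case: b => [|b1 b2] /=; rewrite ?orbF ?andbF ?andbT ?orbT //= !orbA.
Qed.

Lemma hasB_build s :
  hasG wsB (build s) = has (hasG wsB) s || ~~ sorted R (behead s).
Proof.
elim: s => // a s IH.
rewrite [build _]/= [hasG _ _]/= -/(build s) IH.
case: s IH => [|b [|c s]] _.
- by case: a => //= *; rewrite !orbF.
- by case: a => [|? ?]; case: b => [|? ?] /=; rewrite ?orbF ?andbF //.
- rewrite [behead _]/= sortedRcc; move: (sorted R (c :: s)) => S.
  rewrite [has _ (a :: _)]/= /R.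
  by case: b => [|b1 b2]; case: c => [|c1 c2] /=; rewrite ?orbF ?andbF ?andbT ?orbT //= !orbA.
Qed.

Lemma sorted_eq2 (e e' : rel btree) x : e =2 e' -> sorted e x = sorted e' x.
Proof. by move=> E; case: x => //= a x; apply: eq_path. Qed.

Lemma behead_rev (m : seq btree) : behead (rev m) = rev (take (size m).-1 m).
Proof.
case/lastP: m => // m a.
by rewrite rev_rcons size_rcons /= -cats1 take_size_cat.
Qed.

Lemma keyAB t : all (fun x => hasG wsB (phi x) == hasG wsA x) (spine t) ->
  hasG wsB (phi t) = hasG wsA t.
Proof.
move=> H.
rewrite phiE hasB_build -[in RHS](build_spine t) hasA_build.
congr orb.
  rewrite has_rev has_map; apply: eq_in_has => x /(allP H) /eqP.
  done.
rewrite behead_rev rev_sorted size_map -map_take sorted_map.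
congr negb; apply: sorted_eq2 => a b /=; rewrite /R !isnode_phi andbC //.
Qed.

Lemma all_keyAB t : all (fun x => hasG wsB (phi x) == hasG wsA x) (spine t).
Proof.
elim: t => //= l IHl r IHr; rewrite IHr andbT.
by rewrite keyAB.
Qed.

Lemma hasAB t : hasG wsB (phi t) = hasG wsA t.
Proof. exact: keyAB (all_keyAB t). Qed.

Lemma hasBA t : hasG wsA (phi t) = hasG wsB t.
Proof. by rewrite -[in RHS](phiK t) hasAB. Qed.

Lemma vert_cat t p q : is_vertex t (p ++ q) -> is_vertex t p.
Proof.
elim: t p => // l IHl r IHr [|b p] //=.
by case: b; [apply: IHr|apply: IHl].
Qed.

Lemma vert_pref t p q : prefix p q -> is_vertex t q -> is_vertex t p.
Proof. by case/prefixP => w ->; apply: vert_cat. Qed.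
Arguments vert_pref {t p q}.
Arguments vert_cat {t p q}.

Lemma edge_pref (c : bool) (a b : seq bool) d :
  (if c then a = rcons b d else prefix (rcons b d) a) -> prefix (rcons b d) a.
Proof. by case: c => // ->; apply: prefix_refl. Qed.
Arguments edge_pref {c a b d}.

Lemma cat_inj (p v w : seq bool) : p ++ v = p ++ w -> v = w.
Proof. by elim: p => //= b p IH [] /IH. Qed.

Lemma contains_cat T P e p :
  (forall v, is_vertex P v -> is_vertex T (p ++ v)) -> contains T P e.
Proof.
move=> H; exists (cat p); split => //; split.
  by move=> v w _ _ /cat_inj.
move=> q b _; rewrite -rcons_cat; case: (e _) => //; exact: prefix_refl.
Qed.

Lemma vertA v : is_vertex P21435 v ->
  v \in [:: [::]; [::false]; [::true]; [::true;false]; [::true;true]].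
Proof. by case: v => [|[] [|[] [|[] ?]]]. Qed.

Lemma vertB v : is_vertex P13254 v ->
  v \in [:: [::]; [::true]; [::true;false]; [::true;true]; [::true;true;false]].
Proof. by case: v => [|[] [|[] [|[] [|[] ?]]]]. Qed.

Lemma containsA T x y z : contains T P21435 (e21435 x y z) <-> hasG wsA T.
Proof.
split.
  case=> f [Hv [_ He]].
  have H1 := edge_pref (He [::] false erefl).
  have H2 : f [:: true] = rcons (f [::]) true := He [::] true erefl.
  have H3 := edge_pref (He [:: true] false erefl).
  have H4 := edge_pref (He [:: true] true erefl).
  rewrite H2 in H3 H4.
  apply/hasGP => //; exists (f [::]) => /=.
  rewrite -!cats1 -!catA /= andbT in H1 H3 H4 *.
  rewrite (vert_pref H1 (Hv [:: false] erefl)) (vert_pref H3 (Hv [:: true; false] erefl)).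
  by rewrite (vert_pref H4 (Hv [:: true; true] erefl)).
move/hasGP => /(_ erefl) [p] /= /and4P [H1 H2 H3 _].
apply: contains_cat => v /vertA; rewrite !inE.
case/orP=> [/eqP->|/orP[/eqP->|/orP[/eqP->|/orP[/eqP->|/eqP->]]]] //.
- by rewrite cats0; apply: (vert_cat H1).
- exact: H1.
- by move: H2; rewrite (_ : [:: true; false] = [:: true] ++ [:: false]) // catA; apply: vert_cat.
- exact: H2.
- exact: H3.
Qed.

Lemma containsB T u v : contains T P13254 (e13254 u v) <-> hasG wsB T.
Proof.
split.
  case=> f [Hv [_ He]].
  have H2 : f [:: true] = rcons (f [::]) true := He [::] true erefl.
  have H3 := edge_pref (He [:: true] false erefl).
  have H4 : f [:: true; true] = rcons (f [:: true]) true := He [:: true] true erefl.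
  have H5 := edge_pref (He [:: true; true] false erefl).
  rewrite H4 H2 in H5; rewrite H2 in H3.
  apply/hasGP => //; exists (f [::]) => /=.
  rewrite -!cats1 -!catA /= andbT in H3 H5 *.
  by rewrite (vert_pref H3 (Hv [:: true; false] erefl)) (vert_pref H5 (Hv [:: true; true; false] erefl)).
move/hasGP => /(_ erefl) [p] /= /and3P [H1 H2 _].
apply: contains_cat => w /vertB; rewrite !inE.
case/orP=> [/eqP->|/orP[/eqP->|/orP[/eqP->|/orP[/eqP->|/eqP->]]]] //.
- by rewrite cats0; apply: (vert_cat H1).
- by move: H1; rewrite (_ : [:: true; false] = [:: true] ++ [:: false]) // catA; apply: vert_cat.
- exact: H1.
- by move: H2; rewrite (_ : [:: true; true; false] = [:: true; true] ++ [:: false]) // catA; apply: vert_cat.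
- exact: H2.
Qed.

Lemma toB x y z u v n (T : avoiders n P21435 (e21435 x y z)) :
  bsize (phi (sval T)) = n /\ ~ contains (phi (sval T)) P13254 (e13254 u v).
Proof.
case: T => t [Hs Hc] /=; split; first by rewrite bsize_phi.
rewrite containsB hasAB => /(containsA t x y z); exact: Hc.
Qed.

Lemma toA x y z u v n (T : avoiders n P13254 (e13254 u v)) :
  bsize (phi (sval T)) = n /\ ~ contains (phi (sval T)) P21435 (e21435 x y z).
Proof.
case: T => t [Hs Hc] /=; split; first by rewrite bsize_phi.
rewrite containsA hasBA => /(containsB t u v); exact: Hc.
Qed.

Theorem lemma22 (x y z u v : bool) (n : nat) :
  exists f : avoiders n P21435 (e21435 x y z) -> avoiders n P13254 (e13254 u v),
    bijective f.
Proof.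
exists (fun T => exist _ (phi (sval T)) (@toB x y z u v n T)).
exists (fun T => exist _ (phi (sval T)) (@toA x y z u v n T)).
- case=> t Ht /=; apply: eq_sig_hprop => /=; last by rewrite phiK.
  by move=> ? ? ?; apply: proof_irrelevance.
- case=> t Ht /=; apply: eq_sig_hprop => /=; last by rewrite phiK.
  by move=> ? ? ?; apply: proof_irrelevance.
Qed.
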